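(* Let $f\in\mathcal{S}_d$ and $\sigma>0$. Then for every prime $p$ the series $\sum_{n=0}^\infty\frac{|D_f(n,p)|}{p^{n\sigma}}$ converges, and it is bounded independently of $p$.
   Context: $\mathcal{S}_d$ is the set of multiplicative functions $f=f_1*\cdots*f_d$ where each $f_i$ is completely multiplicative with $|f_i(n)|\le1$, and $(a*b)(n)=\sum_{dm=n}a(d)b(m)$. For a prime $p$ and integer $k\ge1$, $D_f(k,p)$ is the determinant of the $k\times k$ matrix $(a_{ij})$ with $a_{ij}=f(p^{i-j+1})$ if $i-j+1\ge0$ and $a_{ij}=0$ otherwise; $D_f(0,p)=1$. *)

(* Defs.v *)
From HB Require Import structures.
From mathcomp Require Import all_boot all_order all_algebra.
From mathcomp Require Import complex.
From mathcomp Require Import all_classical all_reals all_analysis.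
Set Implicit Arguments. Unset Strict Implicit. Unset Printing Implicit Defensive.
Import Order.TTheory GRing.Theory Num.Theory.
Local Open Scope ring_scope.

(* Arithmetic functions with complex values: maps nat -> R[i]; the value at 0
   is irrelevant. *)

Definition dconv (R : rcfType) (a b : nat -> R[i]) : nat -> R[i] :=
  fun n => \sum_(k < n.+1 | (0 < k)%N && (k %| n)%N) a k * b (n %/ k)%N.

Definition dunit (R : rcfType) : nat -> R[i] := fun n => (n == 1%N)%:R.

Definition completely_multiplicative (R : rcfType) (g : nat -> R[i]) : Prop :=
  g 1%N = 1 /\ forall m n, (0 < m)%N -> (0 < n)%N -> g (m * n)%N = g m * g n.

Definition in_S (R : rcfType) (d : nat) (f : nat -> R[i]) : Prop :=
  exists fs : 'I_d -> nat -> R[i],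
    (forall i, completely_multiplicative (fs i)) /\
    (forall i n, (0 < n)%N -> Normc.normc (fs i n) <= 1) /\
    (forall n, (0 < n)%N -> f n = (\big[@dconv R/@dunit R]_(i < d) fs i) n).

(* D_f(k,p) = det (a_ij)_{k x k}, a_ij = f(p^(i-j+1)) if i-j+1 >= 0, else 0.
   With 0-based indices i j : 'I_k, i - j + 1 >= 0 iff j <= i + 1, and the
   exponent is i + 1 - j. For k = 0 the determinant of the empty matrix is 1. *)
Definition Dmat (R : rcfType) (f : nat -> R[i]) (k p : nat) : 'M[R[i]]_k :=
  \matrix_(i < k, j < k) if (j <= i.+1)%N then f (p ^ (i.+1 - j))%N else 0.

Definition D (R : rcfType) (f : nat -> R[i]) (k p : nat) : R[i] :=
  \det (Dmat f k p).

(* Main.v *)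
Require Import Defs.
From HB Require Import structures.
From mathcomp Require Import all_boot all_order all_algebra.
From mathcomp Require Import complex.
From mathcomp Require Import all_classical all_reals all_analysis.
Import Order.TTheory GRing.Theory Num.Theory.
Import numFieldNormedType.Exports.
Local Open Scope ring_scope.
Set Implicit Arguments. Unset Strict Implicit.

Section Alg.
Variable C : comNzRingType.

Definition Dm (a : nat -> C) k : 'M[C]_k :=
  \matrix_(i < k, j < k) if (j <= i.+1)%N then a (i.+1 - j)%N else 0.
Definition Ds a k := \det (Dm a k).

Lemma bump_lt k i : (i < k)%N -> bump k i = i.
Proof. by rewrite /bump; case: leqP. Qed.

Lemma Ds_minor (a : nat -> C) k :
  row' ord_max (col' ord_max (Dm a k.+1)) = Dm a k.
Proof. by apply/matrixP => i j; rewrite !mxE /= !bump_lt. Qed.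

Definition Sh k : 'M[C]_k := \matrix_(l < k, j < k) ((l : nat) == j.+1)%:R.

Lemma mulSh k (A : 'M[C]_k.+1) i (j : 'I_k.+1) :
  (A *m Sh k.+1) i j = if (j.+1 < k.+1)%N then A i (inord j.+1) else 0.
Proof.
rewrite !mxE.
under eq_bigr do rewrite mxE.
case: ifP => H.
  rewrite (bigD1 (inord j.+1)) //= big1 ?addr0; first by rewrite inordK // eqxx mulr1.
  move=> l /eqP Hl; case: eqP => E; last by rewrite mulr0.
  by exfalso; apply: Hl; apply/val_inj; rewrite /= inordK // E.
rewrite big1 // => l _; case: eqP => E; last by rewrite mulr0.
by exfalso; move: (ltn_ord l); rewrite E H.
Qed.

Lemma det_U k c : \det (1%:M - c *: Sh k) = 1.
Proof.
rewrite det_trig.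
  by rewrite big1 // => i _; rewrite !mxE eqxx /= eqn_leq ltnn andbF mulr0 subr0.
apply/is_trig_mxP => i j lt; rewrite !mxE.
have -> : (i == j) = false by apply/negbTE; rewrite neq_ltn lt.
have -> : ((i : nat) == j.+1) = false.
  by apply/negbTE; rewrite neq_ltn ltnS ltnW.
by rewrite mulr0 subr0.
Qed.

Definition ent (a : nat -> C) (i j : nat) := if (j <= i.+1)%N then a (i.+1 - j)%N else 0.

Lemma ent_rel (a a' : nat -> C) c i j : a' 0%N = a 0%N ->
  (forall n, a' n.+1 = a n.+1 - c * a n) ->
  ent a' i j = ent a i j - c * ent a i j.+1.
Proof.
move=> a'0 ha; rewrite /ent ltnS.
case: (ltngtP j i.+1) => hji.
- have hji' : (j <= i)%N by [].
  by rewrite hji' subSn // ha subSS.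
- rewrite ifF ?mulr0 ?subr0 //; apply/negbTE; rewrite -ltnNge; exact: ltnW.
- by rewrite hji ltnn subnn mulr0 subr0.
Qed.

Lemma key (a a' : nat -> C) c k : a 0%N = 1 -> a' 0%N = a 0%N ->
  (forall n, a' n.+1 = a n.+1 - c * a n) ->
  Ds a k.+1 = Ds a' k.+1 + c * Ds a' k.
Proof.
move=> a0 a'0 ha.
set A := Dm a k.+1.
set B := A *m (1%:M - c *: Sh k.+1).
have dB : \det B = Ds a k.+1 by rewrite det_mulmx det_U mulr1.
have Bij i j : B i j = ent a i j - c * (if (j.+1 < k.+1)%N then ent a i j.+1 else 0).
  rewrite /B mulmxBr mulmx1 -scalemxAr !mxE.
  have := mulSh A i j; rewrite [LHS]mxE => ->.
  case H: (j.+1 < k.+1)%N => //; by rewrite /A mxE inordK.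
have cB : col' ord_max (Dm a' k.+1) = col' ord_max B.
  apply/matrixP => i j; rewrite [LHS]mxE [LHS]mxE [RHS]mxE Bij /= bump_lt // ltnS ltn_ord.
  exact: ent_rel.
have Bm i : Dm a' k.+1 i ord_max = B i ord_max - c * (i == ord_max)%:R.
  rewrite Bij ltnn mulr0 subr0 mxE.
  change (ent a' i k = ent a i k - c * (i == ord_max)%:R).
  rewrite (ent_rel i k a'0 ha) /ent.
  have -> : (k.+1 <= i.+1)%N = (i == ord_max :> 'I_k.+1).
    rewrite ltnS; apply/idP/eqP => [h|->//]; apply/val_inj/eqP.
    by rewrite /= eqn_leq h andbT -ltnS ltn_ord.
  case E: (i == ord_max) => //; by rewrite (eqP E) /= subnn a0.
rewrite -dB /Ds (expand_det_col (Dm a' k.+1) ord_max).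
under eq_bigr do rewrite Bm /cofactor cB mulrBl.
rewrite sumrB {1}(expand_det_col B ord_max) /cofactor.
rewrite [X in _ - X](bigD1 ord_max) //= [X in _ - (_ + X)]big1 ?addr0; last first.
  move=> i Hi; by rewrite (negbTE Hi) mulr0 mul0r.
rewrite eqxx mulr1 -cB Ds_minor.
by rewrite -signr_odd oddD addbb expr0 mul1r subrK.
Qed.
End Alg.

Section NT.
Variable R : realType.

Lemma cm_pow (h : nat -> R[i]) p e : (0 < p)%N -> completely_multiplicative h ->
  h (p ^ e)%N = h p ^+ e.
Proof.
move=> p0 [h1 hM]; elim: e => [|e IH]; first by rewrite expn0 h1 expr0.
by rewrite expnS hM ?expn_gt0 ?p0 // IH exprS.
Qed.

Lemma sum_div_pow (F : nat -> R[i]) p m : prime p ->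
  \sum_(k < (p ^ m).+1 | (0 < k)%N && (k %| p ^ m)%N) F k = \sum_(t < m.+1) F (p ^ t)%N.
Proof.
move=> pp; have p1 := prime_gt1 pp; have p0 := prime_gt0 pp.
have hle t : (t < m.+1)%N -> (p ^ t < (p ^ m).+1)%N.
  by move=> ht; rewrite ltnS leq_exp2l.
rewrite (reindex_onto (fun t : 'I_m.+1 => inord (p ^ t) : 'I_(p ^ m).+1)
   (fun k : 'I_(p ^ m).+1 => inord (logn p k))) /=.
  apply: eq_big => t.
    have ht := hle _ (ltn_ord t).
    rewrite inordK // expn_gt0 p0 /= pfactorK // inord_val eqxx andbT.
    have -> : (p ^ m = p ^ t * p ^ (m - t))%N by rewrite -expnD subnKC // -ltnS.
    exact: dvdn_mulr.
  by move=> _; rewrite inordK //; apply: hle.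
move=> k /andP [k0 /(dvdn_pfactor _ _ pp) [e he ke]].
apply/val_inj; rewrite /= ke pfactorK //.
by rewrite (@inordK m e) ?ltnS // inordK // -ke.
Qed.

Lemma dconv_pow (g h : nat -> R[i]) p m : prime p -> completely_multiplicative h ->
  dconv g h (p ^ m)%N = \sum_(t < m.+1) g (p ^ t)%N * h p ^+ (m - t).
Proof.
move=> pp hcm; rewrite /dconv (sum_div_pow (fun k => g k * h (p ^ m %/ k)%N)) //.
apply: eq_bigr => t _; rewrite -expnB; [|exact: prime_gt0|by rewrite -ltnS].
by rewrite (cm_pow (h:=h) _ (prime_gt0 pp)).
Qed.


Definition nrm (x : R[i]) := Normc.normc x.

Lemma nrm_ge0 x : 0 <= nrm x.
Proof. by rewrite /nrm /Normc.normc; case: x => a b; exact: sqrtr_ge0. Qed.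

Lemma dconv_pow_l (h g : nat -> R[i]) p m : prime p -> completely_multiplicative h ->
  dconv h g (p ^ m)%N = \sum_(t < m.+1) h p ^+ t * g (p ^ (m - t))%N.
Proof.
move=> pp hcm; rewrite /dconv (sum_div_pow (fun k => h k * g (p ^ m %/ k)%N)) //.
apply: eq_bigr => t _; rewrite -expnB; [|exact: prime_gt0|by rewrite -ltnS].
by rewrite (cm_pow (h:=h) _ (prime_gt0 pp)).
Qed.

Lemma Ds0 (C : comNzRingType) (a : nat -> C) : Ds a 0 = 1.
Proof. by rewrite /Ds det_mx00. Qed.

Lemma Ds_unit (C : comNzRingType) (a : nat -> C) k : (forall m, a m.+1 = 0) -> Ds a k.+1 = 0.
Proof.
move=> ha; rewrite /Ds (expand_det_row _ ord_max) big1 // => j _.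
rewrite mxE; case: ifP => _; last by rewrite mul0r.
by rewrite /= (@subSn j k (ltn_ord j)) ha mul0r.
Qed.

Lemma chain p n : prime p -> forall gs : nat -> nat -> R[i],
  (forall i, (i < n)%N -> completely_multiplicative (gs i)) ->
  (forall i, (i < n)%N -> nrm (gs i p) <= 1) ->
  let A := fun m => (\big[@dconv R/@dunit R]_(i < n) gs i) (p ^ m)%N in
  A 0%N = 1 /\ forall k, nrm (Ds A k) <= 'C(n, k)%:R.
Proof.
move=> pp; have p1 := prime_gt1 pp.
elim: n => [|n IH] gs gcm gb A.
  have hA m : A m = (m == 0)%N%:R.
    by rewrite /A big_ord0 /dunit -[X in (_ == X)%N](expn0 p) eqn_exp2l.
  split; first by rewrite hA.
  case=> [|k]; first by rewrite Ds0 /nrm Normc.normc1.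
  by rewrite Ds_unit ?bin_small // /nrm Normc.normc0.
pose B := fun m => (\big[@dconv R/@dunit R]_(i < n) gs i.+1) (p ^ m)%N.
have [B0 IHb] : B 0%N = 1 /\ forall k, nrm (Ds B k) <= 'C(n, k)%:R
  := IH (fun i => gs i.+1) (fun i hi => gcm i.+1 hi) (fun i hi => gb i.+1 hi).
set c := gs 0%N p.
have hA m : A m = \sum_(t < m.+1) c ^+ t * B (m - t)%N.
  by rewrite /A big_ord_recl dconv_pow_l //; apply: gcm.
have A0 : A 0%N = 1 by rewrite hA big_ord1 /= expr0 mul1r B0.
split => //.
have rel m : B m.+1 = A m.+1 - c * A m.
  rewrite !hA big_ord_recl /= expr0 mul1r subn0 mulr_sumr.
  have -> : \sum_(i < m.+1) c ^+ bump 0 i * B (m.+1 - bump 0 i)%N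
     = \sum_(i < m.+1) c * (c ^+ i * B (m - i)%N).
    by apply: eq_bigr => i _; rewrite /bump /= add1n exprS subSS mulrA.
  by rewrite addrK.
case=> [|k]; first by rewrite Ds0 bin0 /nrm Normc.normc1.
rewrite (key k A0 (etrans B0 (esym A0)) rel) binS natrD.
apply: le_trans; first exact: le_normcD.
rewrite /nrm Normc.normcM; apply: lerD; first exact: IHb.
apply: le_trans; last exact: (IHb k).
apply: ler_piMl; first exact: nrm_ge0.
exact: (gb 0%N).
Qed.

End NT.

Unset Implicit Arguments.
Set Strict Implicit.

Theorem lemma7 (R : realType) (d : nat) (f : nat -> R[i]) (sigma : R) :
  in_S d f -> 0 < sigma ->
  exists C : R, forall p : nat, prime p ->
    cvgn (@series R (fun n : nat => Normc.normc (D f n p) / (p%:R `^ (n%:R * sigma))))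
    /\ limn (@series R (fun n : nat => Normc.normc (D f n p) / (p%:R `^ (n%:R * sigma)))) <= C.
Proof.
move=> [fs [hcm [hb hf]]] s0.
pose gs := fun i : nat => if insub i is Some o then fs o else @dunit R.
have gsE (i : 'I_d) : gs i = fs i by rewrite /gs valK.
have big_eq : \big[@dconv R/@dunit R]_(i < d) fs i = \big[@dconv R/@dunit R]_(i < d) gs i.
  by apply: eq_bigr => i _; rewrite gsE.
exists (\sum_(n < d.+1) 'C(d, n)%:R) => p pp.
have p0 := prime_gt0 pp.
have hcm' : forall i, (i < d)%N -> completely_multiplicative (gs i).
  by move=> i hi; have := gsE (Ordinal hi); rewrite /= => ->.
have hb'' : forall i, (i < d)%N -> nrm (gs i p) <= 1.
  by move=> i hi; have := gsE (Ordinal hi); rewrite /= => ->; apply: hb.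
have [_ hb'] := chain pp hcm' hb''.
have DE n : D f n p = Ds (fun m : nat => (\big[@dconv R/@dunit R]_(i < d) gs i) (p ^ m)%N) n.
  rewrite /D /Ds; congr (\det _); apply/matrixP => i j; rewrite !mxE.
  case: ifP => // _; rewrite hf ?expn_gt0 ?p0 // big_eq //.
set u := fun n : nat => _.
have u_ge0 n : 0 <= u n.
  by rewrite /u divr_ge0 // ?powR_ge0 //; exact: (nrm_ge0 (D f n p)).
have u_le n : u n <= 'C(d, n)%:R.
  have P1 : 1 <= p%:R `^ (n%:R * sigma) :> R.
    rewrite -[X in X <= _](powRr0 p%:R); apply: ler_powR; first by rewrite ler1n.
    by rewrite mulr_ge0 // ltW.
  apply: le_trans (_ : nrm (D f n p) <= _); last by rewrite DE; exact: hb'.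
  rewrite /u ler_piMr //; first exact: (nrm_ge0 (D f n p)).
  by rewrite invf_le1 // (lt_le_trans ltr01).
have u0 n : (d < n)%N -> u n = 0.
  move=> hn; apply/eqP; rewrite eq_le u_ge0 andbT.
  by apply: le_trans (u_le n) _; rewrite bin_small.
have serE N : (d.+1 <= N)%N -> series u N = series u d.+1.
  move=> hN; rewrite /series /= (big_cat_nat _ (n := d.+1)) //=.
  rewrite [X in _ + X]big1_seq ?addr0 // => i /andP [_].
  by rewrite mem_index_iota => /andP [hi _]; apply: u0.
have nc : \forall N \near eventually, series u N = series u d.+1.
  by exists d.+1 => // N /= hN; apply: serE.
split; first exact: (is_cvg_near_cst _ nc).
rewrite (lim_near_cst _ nc); last exact: Rhausdorff.
rewrite /series /= -(big_mkord xpredT (fun n => (binomial d n)%:R)).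
by apply: ler_sum_nat => i _; apply: u_le.
Qed.
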